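(* Let $f\in C^1([0,1],\mathbb{R})$ satisfy $f(0)=f(1)=0$, $f(s)>0$ for all $s\in(0,1)$, $f'(1)<0$, and suppose there exist $s_0\in(0,1)$, $K\ge 0$, $\alpha>0$ and $r>0$ such that $f(s)\le r\frac{s}{(1+|\ln s|)^\alpha}$ for all $s\in(0,1)$ and $f(s)\ge r\frac{s}{(1+|\ln s|)^\alpha}(1-Ks)$ for all $s\in(0,s_0]$. Let $u_0:\mathbb{R}\to[0,1]$ be uniformly continuous with $u_0>0$ on $\mathbb{R}$, $\liminf_{x\to-\infty}u_0>0$, $\lim_{x\to+\infty}u_0=0$, of class $C^2$ and nonincreasing on $[\xi_0,+\infty)$ for some $\xi_0>0$, and such that $\varphi_0:=-\ln u_0$ satisfies $\varphi_0'=o(\varphi_0^{-\alpha})$ and $\varphi_0''=o(\varphi_0')$ as $x\to+\infty$. Fix $\varepsilon>0$, let $\rho:=r+\frac{\varepsilon}{2}$, and define $$w(t,x):=\exp\Big\{1-\big[(1+\varphi_0(x))^{\alpha+1}-\rho(\alpha+1)t\big]^{\frac{1}{\alpha+1}}\Big\},\qquad x_0(t):=\sup\Big\{x: u_0(x)=\exp\big(1-(\rho(\alpha+1)t+1)^{\frac{1}{\alpha+1}}\big)\Big\}.$$ Let $t^\#>0$ be a time such that $|w_{xx}(t,x)|<\frac{\varepsilon}{2}\frac{w(t,x)}{(1-\ln w(t,x))^\alpha}$ for all $x\ge x_0(t)$, $t\ge t^\#$ (such a time exists). Define $m(t,x):=w(t+t^\#,x)$ for $x\ge x_0(t+t^\#)$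 and $m(t,x):=1$ for $x<x_0(t+t^\#)$. Then $m$ is a supersolution of $u_t=u_{xx}+f(u)$ for all $t>0$ and $x\in\mathbb{R}$, i.e. $m_t-m_{xx}-f(m)\ge0$ on each of the regions $\{x<x_0(t+t^\#)\}$ and $\{x\ge x_0(t+t^\#)\}$.
   Context: $0<m\le 1$; $w$ solves $w_t=\rho\,w/(1-\ln w)^\alpha$ with $w(0,\cdot)=u_0$ and $w(t,x_0(t))=1$. *)

(* Defs.v *)
From Stdlib Require Import Reals.
From Coquelicot Require Import Coquelicot.
Open Scope R_scope.

Definition deriv_within (D : R -> Prop) (f : R -> R) (x l : R) : Prop :=
  filterlim (fun h => (f (x + h) - f x) / h)
    (within (fun h => h <> 0 /\ D (x + h)) (locally 0)) (locally l).

Definition cont_within (D : R -> Prop) (f : R -> R) (x : R) : Prop :=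
  filterlim f (within D (locally x)) (locally (f x)).

(* f is C^1 on D with derivative f' (one-sided at boundary points of D) *)
Definition C1_on (D : R -> Prop) (f f' : R -> R) : Prop :=
  forall x, D x -> deriv_within D f x (f' x) /\ cont_within D f' x.

Definition C2_on (D : R -> Prop) (f f' f'' : R -> R) : Prop :=
  C1_on D f f' /\ C1_on D f' f''.

Definition unif_cont (u : R -> R) : Prop :=
  forall e, 0 < e -> exists d, 0 < d /\
    forall x y, Rabs (x - y) < d -> Rabs (u x - u y) < e.

Definition phi0 (u0 : R -> R) (x : R) : R := - ln (u0 x).

Definition wfun (u0 : R -> R) (alpha rho : R) (t x : R) : R :=
  exp (1 - Rpower (Rpower (1 + phi0 u0 x) (alpha + 1) - rho * (alpha + 1) * t)
                  (1 / (alpha + 1))).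

(* x_0(t) = sup { x | u0 x = exp(1 - (rho(alpha+1)t + 1)^(1/(alpha+1))) },
   as an extended real (sup of the empty set is -oo) *)
Definition x0fun (u0 : R -> R) (alpha rho : R) (t : R) : Rbar :=
  Lub_Rbar (fun x => u0 x = exp (1 - Rpower (rho * (alpha + 1) * t + 1) (1 / (alpha + 1)))).

(* Main.v *)
Require Import Defs.
From Stdlib Require Import Reals Lra.
From Coquelicot Require Import Coquelicot.
Open Scope R_scope.

Lemma w_deriv (B c a ts t : R) : 0 < B - c*(t+ts) ->
  is_derive (fun s => exp (1 - Rpower (B - c*(s+ts)) a)) t
   (exp (1 - Rpower (B - c*(t+ts)) a) * (a * c / (B - c*(t+ts))) * Rpower (B - c*(t+ts)) a).
Proof.
intros H. unfold Rpower. auto_derive. auto.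
unfold Rminus. field. lra.
Qed.

Lemma u0_cont (u0 : R -> R) : unif_cont u0 -> continuity u0.
Proof.
intros Hu x. apply continuity_pt_filterlim.
intros P [e He]. 
destruct (Hu e (cond_pos e)) as [d [Hd Hd']].
exists (mkposreal d Hd). intros y Hy. apply He.
change (Rabs (y - x) < d) in Hy. change (Rabs (u0 y - u0 x) < e). apply Hd'. exact Hy.
Qed.

Theorem lemma3p3
  (f f' : R -> R) (s0 K alpha r : R) (u0 : R -> R) (xi0 eps tsharp : R)
  (* hypotheses on f *)
  (Hf_C1 : C1_on (fun s => 0 <= s <= 1) f f')
  (Hf0 : f 0 = 0) (Hf1 : f 1 = 0)
  (Hfpos : forall s, 0 < s < 1 -> 0 < f s)
  (Hf'1 : f' 1 < 0)
  (Hs0 : 0 < s0 < 1) (HK : 0 <= K) (Halpha : 0 < alpha) (Hr : 0 < r)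
  (Hfup : forall s, 0 < s < 1 -> f s <= r * s / Rpower (1 + Rabs (ln s)) alpha)
  (Hflow : forall s, 0 < s <= s0 ->
     r * s / Rpower (1 + Rabs (ln s)) alpha * (1 - K * s) <= f s)
  (* hypotheses on u0 *)
  (Hu0range : forall x, 0 <= u0 x <= 1)
  (Hu0uc : unif_cont u0)
  (Hu0pos : forall x, 0 < u0 x)
  (Hu0left : exists c, 0 < c /\ exists M, forall x, x <= M -> c <= u0 x)
  (Hu0right : is_lim u0 p_infty 0)
  (Hxi0 : 0 < xi0)
  (Hu0reg : exists u1 u2 p1 p2 : R -> R,
     C2_on (fun x => xi0 <= x) u0 u1 u2 /\
     (forall x y, xi0 <= x -> x <= y -> u0 y <= u0 x) /\
     C2_on (fun x => xi0 <= x) (phi0 u0) p1 p2 /\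
     (forall e, 0 < e -> exists M, forall x, M <= x ->
        Rabs (p1 x) <= e * Rabs (Rpower (phi0 u0 x) (- alpha))) /\
     (forall e, 0 < e -> exists M, forall x, M <= x ->
        Rabs (p2 x) <= e * Rabs (p1 x)))
  (Heps : 0 < eps)
  (* the time t# *)
  (Htsharp : 0 < tsharp)
  (Hw : forall t x : R, tsharp <= t -> Rbar_le (x0fun u0 alpha (r + eps / 2) t) (Finite x) ->
     ex_derive_n (fun z => wfun u0 alpha (r + eps / 2) t z) 2 x /\
     Rabs (Derive_n (fun z => wfun u0 alpha (r + eps / 2) t z) 2 x) <
       eps / 2 * wfun u0 alpha (r + eps / 2) t x
         / Rpower (1 - ln (wfun u0 alpha (r + eps / 2) t x)) alpha) :
  forall t x : R, 0 < t ->
    (* region x < x0(t+t#), where m = 1 *)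
    (Rbar_lt (Finite x) (x0fun u0 alpha (r + eps / 2) (t + tsharp)) ->
       Derive (fun _ : R => 1) t - Derive_n (fun _ : R => 1) 2 x - f 1 >= 0) /\
    (* region x >= x0(t+t#), where m(t,x) = w(t+t#,x) *)
    (Rbar_le (x0fun u0 alpha (r + eps / 2) (t + tsharp)) (Finite x) ->
       Derive (fun s => wfun u0 alpha (r + eps / 2) (s + tsharp) x) t
       - Derive_n (fun z => wfun u0 alpha (r + eps / 2) (t + tsharp) z) 2 x
       - f (wfun u0 alpha (r + eps / 2) (t + tsharp) x) >= 0).
Proof.
intros t x Ht. split.
{ intros _. rewrite Derive_const, Derive_n_const, Hf1. lra. }
intros Hx0.
set (rho := r + eps / 2).
set (T := t + tsharp).
set (c := rho * (alpha + 1)).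
set (P := Rpower (c * T + 1) (1 / (alpha + 1))).
assert (Hcont := u0_cont u0 Hu0uc).
assert (HT : tsharp <= T) by (unfold T; lra).
assert (Hrho : 0 < rho) by (unfold rho; lra).
assert (Hc : 0 < c) by (unfold c; nra).
assert (HcT : 0 < c * T) by (unfold T; nra).
assert (Ha : u0 x <= exp (1 - P)).
{ destruct (Rle_dec (u0 x) (exp (1 - P))) as [h|h]; [exact h|exfalso].
  apply Rnot_le_lt in h.
  assert (Hpos : 0 < exp (1 - P)) by apply exp_pos.
  destruct (Hu0right (ball 0 (exp (1 - P)))) as [M HM].
  { exists (mkposreal _ Hpos). auto. }
  set (M' := Rmax (M + 1) (x + 1)).
  assert (HM' : Rabs (u0 M' - 0) < exp (1 - P)).
  { apply (HM M'). unfold M'. pose proof (Rmax_l (M+1) (x+1)). lra. }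
  assert (HxM : x < M') by (unfold M'; pose proof (Rmax_r (M+1) (x+1)); lra).
  rewrite Rminus_0_r in HM'. pose proof (Rle_abs (u0 M')) as hh.
  destruct (IVT_gen u0 x M' (exp (1 - P)) Hcont) as [y [Hy1 Hy2]].
  { rewrite Rmin_right; [|lra]. rewrite Rmax_left; lra. }
  rewrite Rmin_left in Hy1; [|lra]. rewrite Rmax_right in Hy1; [|lra].
  assert (Hyx : x < y).
  { destruct (Req_dec x y) as [e|e]; [subst y; lra|lra]. }
  assert (HyS : Rbar_le (Finite y) (x0fun u0 alpha rho T)).
  { unfold x0fun. destruct (Lub_Rbar_correct (fun x1 => u0 x1 = exp (1 - Rpower (rho * (alpha + 1) * T + 1) (1 / (alpha + 1))))) as [Hub _].
    apply Hub. rewrite Hy2. reflexivity. }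
  assert (Hc2 := Rbar_le_trans _ _ _ HyS Hx0). simpl in Hc2. lra. }
set (phi := phi0 u0 x).
assert (HP1 : 1 <= P).
{ unfold P. rewrite <- (Rpower_O (c*T+1)) at 1 by lra. apply Rle_Rpower. lra.
  apply Rlt_le, Rdiv_lt_0_compat; lra. }
assert (Hphi : P - 1 <= phi).
{ unfold phi, phi0. pose proof (Hu0pos x).
  assert (ln (u0 x) <= 1 - P).
  { rewrite <- (ln_exp (1 - P)). apply ln_le; auto. }
  lra. }
set (B := Rpower (1 + phi) (alpha + 1)).
set (A := B - c * T).
assert (HA : 1 <= A).
{ assert (Rpower P (alpha + 1) <= B).
  { apply Rle_Rpower_l; lra. }
  assert (Rpower P (alpha + 1) = c * T + 1).
  { unfold P. rewrite Rpower_mult.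
    replace (1 / (alpha + 1) * (alpha + 1)) with 1 by (field; lra).
    apply Rpower_1. lra. }
  unfold A. lra. }
set (a := 1 / (alpha + 1)).
set (Q := Rpower A a).
assert (Ha0 : 0 < a) by (unfold a; apply Rdiv_lt_0_compat; lra).
assert (HQ1 : 1 <= Q).
{ unfold Q. replace 1 with (Rpower 1 a) at 1.
  apply Rle_Rpower_l; lra. unfold Rpower. rewrite ln_1, Rmult_0_r. apply exp_0. }
set (w := exp (1 - Q)).
assert (Hwdef : wfun u0 alpha rho T x = w) by reflexivity.
assert (Hlnw : ln w = 1 - Q) by apply ln_exp.
assert (Hwpos : 0 < w) by apply exp_pos.
set (D := Rpower Q alpha).
assert (HDpos : 0 < D) by apply exp_pos.
assert (HDA : D * A = Q * A * / Q * D) by (field; lra).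
assert (Hder : Derive (fun s => wfun u0 alpha rho (s + tsharp) x) t = rho * w / D).
{ apply is_derive_unique.
  unfold wfun. fold phi.
  replace (rho * w / D) with
   (exp (1 - Rpower (Rpower (1 + phi) (alpha + 1) - rho * (alpha + 1) * (t+tsharp)) (1 / (alpha + 1))) * ((1 / (alpha + 1)) * (rho * (alpha + 1)) / (Rpower (1 + phi) (alpha + 1) - rho * (alpha + 1) * (t+tsharp))) * Rpower (Rpower (1 + phi) (alpha + 1) - rho * (alpha + 1) * (t+tsharp)) (1 / (alpha + 1))).
  2: { fold B T c a. fold A. fold Q. fold w.
       assert (HQD : Q * D = A).
       { unfold D, Q. rewrite Rpower_mult, <- Rpower_plus.
         replace (a + a * alpha) with 1 by (unfold a; field; lra). apply Rpower_1; lra. }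
       unfold c. rewrite <- HQD. unfold a. field. split; lra. }
  apply w_deriv. fold B T c. fold A. lra. }
rewrite Hder.
destruct (Hw T x HT Hx0) as [_ Hw2].
fold rho in Hw2. rewrite Hwdef, Hlnw in Hw2.
replace (1 - (1 - Q)) with Q in Hw2 by ring. fold D in Hw2.
rewrite Hwdef.
assert (Hfw : f w <= r * w / D).
{ destruct (Req_dec Q 1) as [e|e].
  - assert (w = 1) by (unfold w; rewrite e; replace (1-1) with 0 by ring; apply exp_0).
    rewrite H, Hf1. apply Rlt_le, Rdiv_lt_0_compat; lra.
  - assert (HQg : 1 < Q) by (destruct HQ1 as [h|h]; [lra| exfalso; apply e; symmetry; exact h]).
    assert (Hw1 : w < 1). { unfold w. rewrite <- exp_0. apply exp_increasing. rewrite exp_0. lra. }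
    pose proof (Hfup w (conj Hwpos Hw1)) as H0.
    rewrite Hlnw in H0. rewrite Rabs_left in H0 by lra.
    replace (1 + - (1 - Q)) with Q in H0 by ring. exact H0. }
pose proof (Rle_abs (Derive_n (fun z => wfun u0 alpha rho T z) 2 x)).
assert (rho * w / D = (eps/2) * w / D + r * w / D) by (unfold rho; field; lra).
lra.
Qed.
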